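(* Let $q$ be a prime power, $\mathbb{F}:=\mathbb{F}_q$, $\alpha\in\mathbb{F}$ with $\mathrm{ord}(\alpha)=n$, $0\leq\delta\leq n-1$, $A:=\mathbb{F}[x]/\langle x^n-1\rangle$, and let $\sigma\in\mathrm{Aut}_{\mathbb{F}}(A)$ be defined by $\sigma(x)=\alpha x$. Let $\mathcal{C}:=\mathrm{im}\,G\subseteq\mathbb{F}[z]^n$ where $G:=\sum_{\nu=0}^{\delta}z^\nu\begin{pmatrix}1&\alpha^\nu&\alpha^{2\nu}&\ldots&\alpha^{(n-1)\nu}\end{pmatrix}$. Then: (a) $\mathfrak{p}(\mathcal{C})$ is the left ideal in $A[z;\sigma]$ generated by the element \[ \sum_{\nu=0}^{\delta}z^\nu\sum_{i=0}^{n-1}\alpha^{\nu i}x^i=\prod_{i=1}^{n-1}(x-\alpha^i)\sum_{\nu=0}^{\delta}z^\nu; \] (b) $\mathfrak{p}(\mathcal{C})$ is the left ideal in $A[z;\sigma]$ generated by the element \[ \varepsilon_0\sum_{\nu=0}^{\delta}z^\nu=\varepsilon_0(1+z\varepsilon_{n-1})(1+z\varepsilon_{n-2})\cdots(1+z\varepsilon_{n-\delta}) \] (the product being empty, i.e. equal to $1$, when $\delta=0$).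
   Context: $\mathrm{ord}(\alpha)$ is the multiplicative order of $\alpha$. For $\sigma\in\mathrm{Aut}_{\mathbb{F}}(A)$, the skew polynomial ring $A[z;\sigma]$ is the set of polynomials $\sum_\nu z^\nu a_\nu$ ($a_\nu\in A$) with usual addition and multiplication determined by associativity, distributivity, the multiplication of $A$, and the rule $az=z\sigma(a)$ for $a\in A$. The map $\mathfrak{p}:\mathbb{F}[z]^n\to A[z;\sigma]$ is $\sum_\nu z^\nu v_\nu\mapsto\sum_\nu z^\nu\sum_{i=0}^{n-1}v_{\nu,i}x^i$ for $v_\nu=(v_{\nu,0},\ldots,v_{\nu,n-1})\in\mathbb{F}^n$. For $k=0,\ldots,n-1$, $\varepsilon_k\in A$ is the primitive idempotent corresponding to the factor $x-\alpha^k$ of $x^n-1=\prod_{i=0}^{n-1}(x-\alpha^i)$, i.e. the unique element of $A$ with $\varepsilon_k(\alpha^i)=\delta_{k,i}$ for $i=0,\ldots,n-1$ (evaluation of a representative). *)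

(* Defs.v *)
From HB Require Import structures.
From mathcomp Require Import all_boot all_order all_algebra.
Set Implicit Arguments. Unset Strict Implicit. Unset Printing Implicit Defensive.
Import GRing.Theory.
Local Open Scope ring_scope.

Notation cycA F n := {poly %/ ('X^n - 1 : {poly F})}.

Section Skew.
Variables (F : fieldType) (n : nat) (a : F).

Definition sigmaA (f : cycA F n) : cycA F n :=
  in_qpoly ('X^n - 1) ((f : {poly F}) \Po (a *: 'X)).

(* The skew polynomial ring A[z; sigma]: an element  sum_nu z^nu a_nu
   is represented by the (ordinary) polynomial  P : {poly A}  with
   P`_nu = a_nu.  Multiplication is determined by  a z = z sigma(a),
   i.e.  (z^i a)(z^j b) = z^(i+j) sigma^j(a) b. *)
Definition skmul (P Q : {poly cycA F n}) : {poly cycA F n} :=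
  \poly_(k < (size P + size Q).-1)
     \sum_(i < k.+1) iter (k - i) sigmaA (P`_i) * Q`_(k - i).

Definition left_ideal_gen (g : {poly cycA F n}) : {poly cycA F n} -> Prop :=
  fun P => exists r : {poly cycA F n}, P = skmul r g.

Definition pfrak (v : 'rV[{poly F}]_n) : {poly cycA F n} :=
  \poly_(nu < \sum_(i < n) size (v ord0 i))
     in_qpoly ('X^n - 1) (\sum_(i < n) (v ord0 i)`_nu *: 'X^i).

End Skew.

Definition genG (F : fieldType) (n : nat) (a : F) (delta : nat)
  : 'M[{poly F}]_(1, n) :=
  \matrix_(j < 1, i < n) \sum_(nu < delta.+1) (a ^+ (nu * i)) *: 'X^nu.

Definition codeC (F : fieldType) (n : nat) (a : F) (delta : nat)
  : 'rV[{poly F}]_n -> Prop :=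
  fun v => exists u : 'M[{poly F}]_(1, 1), v = u *m genG n a delta.

(* epsilon_k : the unique element of A with eps_k(a^i) = delta_{k,i}
   for i = 0..n-1 (evaluation of the canonical representative). *)
Definition epsA (F : finFieldType) (n : nat) (a : F) (k : nat) : cycA F n :=
  odflt 0 [pick e : cycA F n |
             [forall i : 'I_n, (e : {poly F}).[a ^+ i] == (i == k :> nat)%:R]].

Arguments sigmaA {F} n a f.
Arguments skmul {F} n a P Q.
Arguments left_ideal_gen {F} n a g _.
Arguments pfrak {F} n v.
Arguments genG {F} n a delta.
Arguments codeC {F} n a delta v.
Arguments epsA {F} n a k.

(* Main.v *)
Require Import Defs.
From HB Require Import structures.
From mathcomp Require Import all_boot all_order all_algebra zify.
Import GRing.Theory.
Local Open Scope ring_scope.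
Set Implicit Arguments. Unset Strict Implicit.

Section Ev.
Variables (F : finFieldType) (n : nat) (a : F).
Hypothesis Hp : n.-primitive_root a.

Local Notation A := (cycA F n).
Local Notation pp := ('X^n - 1 : {poly F}).

Lemma n_gt0 : (0 < n)%N.
Proof. exact: prim_order_gt0 Hp. Qed.

Lemma mkm : mk_monic pp = pp.
Proof.
by rewrite /mk_monic size_XnsubC ?n_gt0 // monicXnsubC ?n_gt0 // ltnS n_gt0.
Qed.

Definition ev (t : nat) (f : A) : F := (f : {poly F}).[a ^+ t].

Lemma an1 : a ^+ n = 1.
Proof. by apply/eqP; rewrite (prim_expr_order Hp). Qed.

Lemma ppa t : pp.[a ^+ t] = 0.
Proof. by rewrite hornerD hornerN hornerXn hornerC -exprM mulnC exprM an1 expr1n subrr. Qed.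

Lemma ev_in t (f : {poly F}) : ev t (in_qpoly pp f) = f.[a ^+ t].
Proof.
rewrite /ev /=.
have hm : mk_monic pp \is monic by exact: monic_mk_monic.
rewrite {2}(Pdiv.RingMonic.rdivp_eq hm f) hornerD hornerM mkm ppa mulr0 add0r.
by [].
Qed.

Lemma ev_mul t (f g : A) : ev t (f * g) = ev t f * ev t g.
Proof.
have -> : f * g = in_qpoly pp ((f : {poly F}) * g) by [].
by rewrite ev_in hornerM.
Qed.

Lemma ev_add t (f g : A) : ev t (f + g) = ev t f + ev t g.
Proof. by rewrite /ev poly_of_qpolyD hornerD. Qed.

Lemma ev0 t : ev t 0 = 0.
Proof. by rewrite /ev /= horner0. Qed.

Lemma ev1 t : ev t 1 = 1.
Proof. by rewrite /ev /= hornerC. Qed.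

Lemma evZ t c (f : A) : ev t (c *: f) = c * ev t f.
Proof. by rewrite /ev poly_of_qpolyZ hornerZ. Qed.

Lemma ev_sum t I (r : seq I) (P : pred I) (G : I -> A) :
  ev t (\sum_(i <- r | P i) G i) = \sum_(i <- r | P i) ev t (G i).
Proof.
elim/big_rec2: _ => [|i y1 y2 _ <-]; first exact: ev0.
by rewrite ev_add.
Qed.

Lemma ev_mod t (f : A) : ev (t %% n) f = ev t f.
Proof. by rewrite /ev (prim_expr_mod Hp). Qed.

Lemma ev_sigma t (f : A) : ev t (sigmaA n a f) = ev t.+1 f.
Proof. by rewrite /sigmaA ev_in horner_comp hornerZ hornerX -exprS. Qed.

Lemma ev_sig t j (f : A) : ev t (iter j (sigmaA n a) f) = ev (t + j) f.
Proof.
elim: j t => [|j IH] t /=; first by rewrite addn0.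
by rewrite ev_sigma IH addSnnS.
Qed.

Lemma size_A (f : A) : (size (f : {poly F}) <= n)%N.
Proof.
have h := size_mk_monic f; rewrite -ltnS (leq_trans h) // mkm size_XnsubC //; exact: n_gt0.
Qed.

Lemma ev_inj (f g : A) : (forall i, (i < n)%N -> ev i f = ev i g) -> f = g.
Proof.
move=> H; apply: val_inj => /=; apply/eqP; rewrite -subr_eq0; apply/eqP.
set d := _ - _.
apply/eqP/negPn/negP => dn0.
have := max_poly_roots dn0 (rs := mkseq (fun i => a ^+ i) n).
have -> : all (root d) (mkseq (fun i => a ^+ i) n).
  apply/allP => x /mapP [i]; rewrite mem_iota add0n => /andP [_ lin] ->.
  by rewrite /root /d hornerD hornerN; have := H i lin; rewrite /ev => ->; rewrite subrr.
have -> : uniq (mkseq (fun i => a ^+ i) n).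
  rewrite map_inj_in_uniq ?iota_uniq // => i j.
  rewrite !mem_iota !add0n => /andP [_ li] /andP [_ lj] /eqP.
  by rewrite (eq_prim_root_expr Hp) !modn_small // => /eqP.
move=> /(_ isT isT); rewrite size_mkseq.
have : (size d <= n)%N.
  by rewrite /d (leq_trans (size_polyD _ _)) // geq_max size_opp !size_A.
by move=> h1 h2; have := leq_trans h2 h1; rewrite ltnn.
Qed.


Local Notation sig j := (iter j (sigmaA n a)).

Definition W (s : nat) : F := \sum_(i < n) (a ^+ s) ^+ i.

Lemma W_val s : W s = if (n %| s)%N then n%:R else 0.
Proof.
rewrite /W; case: ifP => hd.
  rewrite -(prim_expr_mod Hp) (eqP hd) expr0.
  by rewrite (eq_bigr (fun _ => 1)) ?sumr_const ?card_ord // => i _; rewrite expr1n.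
have hx : a ^+ s - 1 != 0.
  rewrite subr_eq0 -(expr0 a) (eq_prim_root_expr Hp) mod0n.
  by apply/negP => h; move: hd; rewrite /dvdn h.
have : (a ^+ s) ^+ n - 1 = 0 by rewrite exprAC an1 expr1n subrr.
rewrite subrX1 => /eqP; rewrite mulf_eq0 (negbTE hx) /= => /eqP.
by [].
Qed.

Lemma evW (f : A) s : ev s f * W s = ev 0 f * W s.
Proof.
rewrite W_val; case: ifP => hd; last by rewrite !mulr0.
by rewrite -ev_mod (eqP hd).
Qed.

Lemma sig0 j : sig j (0 : A) = 0.
Proof. by apply: ev_inj => i _; rewrite ev_sig !ev0. Qed.

Lemma coef_skmul (P Q : {poly A}) k :
  (skmul n a P Q)`_k = \sum_(i < k.+1) sig (k - i) P`_i * Q`_(k - i).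
Proof.
rewrite /skmul coef_poly; case: ifP => // hk; symmetry; apply: big1 => i _.
case: (ltnP i (size P)) => hi; last by rewrite nth_default // sig0 mul0r.
case: (ltnP (k - i) (size Q)) => hq; last by rewrite (nth_default _ hq) mulr0.
have h4 := ltn_ord i; move: hk hi hq h4 => /negbT; rewrite -leqNgt -subn1; set sp := size P; set sq := size Q; move: (nat_of_ord i) => ii h1 h2 h3 h4; exfalso; lia.
Qed.

Lemma coef_skmulC (c : A) (Q : {poly A}) k :
  (skmul n a c%:P Q)`_k = sig k c * Q`_k.
Proof.
rewrite coef_skmul big_ord_recl /= subn0 coefC eqxx big1 ?addr0 // => i _.
by rewrite coefC /= sig0 mul0r.
Qed.

Lemma coef_skmul1X (P : {poly A}) (s : A) k :
  (skmul n a P (1 + 'X * s%:P))`_k =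
  P`_k + (if k is k'.+1 then sigmaA n a (P`_k') * s else 0).
Proof.
rewrite coef_skmul big_ord_recr /= subnn coefD coef1 coefXM /= addr0 mulr1 addrC.
congr (_ + _); case: k => [|k]; first by rewrite big_ord0.
rewrite big_ord_recr /= subSnn coefD coef1 coefXM /= coefC /= add0r.
rewrite big1 ?add0r // => i _.
have h2 : (1 < k.+1 - i)%N by have := ltn_ord i; lia.
rewrite coefD coef1 coefXM.
have -> : (k.+1 - i == 0)%N = false by apply/eqP; lia.
rewrite coefC.
have -> : ((k.+1 - i).-1 == 0)%N = false by apply/eqP; lia.
by rewrite /= addr0 mulr0.
Qed.


Lemma coef_pfrak (v : 'rV[{poly F}]_n) k :
  (pfrak n v)`_k = in_qpoly pp (\sum_(i < n) (v ord0 i)`_k *: 'X^i).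
Proof.
rewrite /pfrak coef_poly; case: ifP => // hk.
rewrite big1 ?in_qpoly0 // => i _.
rewrite nth_default ?scale0r //.
have hk' : (\sum_(i0 < n) size (v ord0 i0) <= k)%N by rewrite leqNgt hk.
apply: leq_trans hk'; by rewrite (bigD1 i) //= leq_addr.
Qed.

Lemma ev_pX t (E : 'I_n -> F) :
  ev t (in_qpoly pp (\sum_(i < n) E i *: 'X^i)) = \sum_(i < n) E i * (a ^+ t) ^+ i.
Proof.
rewrite ev_in horner_sum; apply: eq_bigr => i _.
by rewrite hornerZ hornerXn.
Qed.

Variable delta : nat.

Lemma ev_pfrak (u : 'M[{poly F}]_(1, 1)) t k :
  ev t ((pfrak n (u *m genG n a delta))`_k) =
  \sum_(j < k.+1) (u ord0 ord0)`_j *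
     (if (k - j < delta.+1)%N then W (t + (k - j)) else 0).
Proof.
rewrite coef_pfrak ev_pX.
under eq_bigr => i _ do rewrite mxE big_ord1 mxE -(poly_def _ (fun nu => a ^+ (nu * i))) coefM mulr_suml.
rewrite exchange_big /=; apply: eq_bigr => j _.
case: ifP => hkj; last by rewrite mulr0 big1 // => i _; rewrite coef_poly hkj mulr0 mul0r.
rewrite /W mulr_sumr; apply: eq_bigr => i _; rewrite coef_poly hkj.
by rewrite -mulrA; congr (_ * _); rewrite exprD exprMn mulrC -!exprM mulnC.
Qed.

Lemma ev_skmul_g (e : A) (c : F) (He : forall s, ev s e = c * W s)
    (r : {poly A}) t k :
  ev t ((skmul n a r (skmul n a e%:P (\poly_(nu < delta.+1) 1)))`_k) =
  \sum_(j < k.+1) (c * ev 0 r`_j) *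
     (if (k - j < delta.+1)%N then W (t + (k - j)) else 0).
Proof.
rewrite coef_skmul ev_sum; apply: eq_bigr => j _.
rewrite coef_skmulC coef_poly ev_mul !ev_sig.
case: ifP => _; last by rewrite mulr0 ev0 !mulr0.
rewrite mulr1 ev_sig He mulrCA evW mulrCA mulrA.
by rewrite (mulrC c).
Qed.

Lemma char_ideal (e : A) (c : F) : c != 0 -> (forall s, ev s e = c * W s) ->
  forall P, (exists v, codeC n a delta v /\ P = pfrak n v) <->
   left_ideal_gen n a (skmul n a e%:P (\poly_(nu < delta.+1) 1)) P.
Proof.
move=> c0 He P; split.
  move=> [v [[u ->] ->]].
  set U := u ord0 ord0.
  exists (\poly_(j < size U) ((U`_j / c) *: 1)).
  apply/polyP => k; apply: ev_inj => t _.
  rewrite ev_pfrak (@ev_skmul_g e c He); apply: eq_bigr => j _; congr (_ * _).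
  rewrite coef_poly; case: ifP => hj; first by rewrite evZ ev1 mulr1 mulrC divfK.
  by rewrite ev0 mulr0 nth_default // leqNgt hj.
move=> [r ->].
pose U := \poly_(j < size r) (c * ev 0 r`_j).
exists (\matrix_(i < 1, j < 1) U *m genG n a delta); split; first by exists (\matrix_(i < 1, j < 1) U).
apply/polyP => k; apply: ev_inj => t _.
rewrite ev_pfrak (@ev_skmul_g e c He); apply: eq_bigr => j _; congr (_ * _).
rewrite mxE /U coef_poly; case: ifP => // hj.
by rewrite nth_default ?ev0 ?mulr0 // leqNgt hj.
Qed.


Definition prodp : {poly F} := \prod_(1 <= i < n) ('X - (a ^+ i)%:P).

Lemma prodp_eq : prodp = \sum_(i < n) 'X^i.
Proof.
have h := factor_Xn_sub_1 Hp.
rewrite big_ltn ?n_gt0 // expr0 subrX1 in h.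
apply: (mulfI (negbT (polyXsubC_eq0 (1 : F)))); rewrite /prodp.
by rewrite polyC1 in h; rewrite h.
Qed.

Lemma ev_prodp s : ev s (in_qpoly pp prodp) = 1 * W s.
Proof.
rewrite ev_in prodp_eq horner_sum mul1r /W; apply: eq_bigr => i _.
by rewrite hornerXn.
Qed.

Definition e0 : A := (n%:R)^-1 *: in_qpoly pp prodp.

Lemma ev_e0 s : ev s e0 = (n %| s)%:R.
Proof.
rewrite evZ ev_prodp mul1r W_val; case: ifP => _; last by rewrite mulr0.
by rewrite mulVf // (prim_root_natf_neq0 Hp).
Qed.

Lemma dvd_shift j k : (j < n)%N -> (k < n)%N -> (n %| j + (n - k))%N = (j == k).
Proof.
move=> jn kn; case: (ltngtP j k) => hjk.
- apply: negbTE; apply/negP => /dvdn_leq; have -> : (0 < j + (n - k))%N by lia.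
  by move=> /(_ isT); lia.
- have -> : (j + (n - k) = (j - k) + n)%N by lia.
  rewrite dvdn_addl ?dvdnn //; apply: negbTE; apply/negP => /dvdn_leq.
  have hp : (0 < j - k)%N by lia.
  by move=> /(_ hp); lia.
- by rewrite hjk subnKC ?dvdnn // ltnW.
Qed.

Lemma ev_eps k i : (k < n)%N -> (i < n)%N -> ev i (epsA n a k) = (i == k)%:R.
Proof.
move=> kn ilt; rewrite /epsA; case: pickP => [e /forallP H | H].
  by have := H (Ordinal ilt); move=> /eqP.
exfalso; move: (H (sig (n - k) e0)) => /negbT/forallPn [j /eqP []].
by rewrite -[LHS]/(ev j _) ev_sig ev_e0 dvd_shift.
Qed.

Lemma ev_eps0 s : ev s (epsA n a 0) = (n %| s)%:R.
Proof.
by rewrite -ev_mod ev_eps ?n_gt0 ?ltn_mod ?n_gt0 //.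
Qed.

Lemma eps0_e0 : epsA n a 0 = e0.
Proof. by apply: ev_inj => i _; rewrite ev_eps0 ev_e0. Qed.

Lemma ev_eps0W s : ev s (epsA n a 0) = (n%:R)^-1 * W s.
Proof. by rewrite eps0_e0 evZ ev_prodp mul1r. Qed.

Definition Q m : {poly A} := \poly_(j < m.+1) sig j (epsA n a 0).

Lemma eps_sig m : (m.+1 < n)%N -> epsA n a (n - m.+1) = sig m.+1 (epsA n a 0).
Proof.
move=> hm; apply: ev_inj => i hi.
have hk : (n - m.+1 < n)%N by lia.
rewrite ev_eps // ev_sig ev_eps0.
have := @dvd_shift i (n - m.+1) hi hk; rewrite subKn ?(ltnW hm) // => ->.
by [].
Qed.

Lemma Q_step m : (m.+1 < n)%N ->
  skmul n a (Q m) (1 + 'X * (epsA n a (n - m.+1))%:P) = Q m.+1.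
Proof.
move=> hm; rewrite eps_sig //; apply/polyP => k; rewrite coef_skmul1X.
apply: ev_inj => t _; rewrite ev_add /Q.
case: k => [|k]; first by rewrite !coef_poly ev0 addr0.
rewrite !coef_poly ev_mul.
case: (ltngtP k m) => hkm.
- have -> : (k < m.+1)%N = true by lia.
  have -> : (k.+1 < m.+1)%N = true by lia.
  have -> : (k.+1 < m.+2)%N = true by lia.
  rewrite ev_sigma ev_sigma !ev_sig !ev_eps0.
  case h1: (n %| t.+1 + k)%N; case h2: (n %| t.+1 + m)%N; rewrite ?mulr0 ?mulr1 ?mul0r ?addr0 //.
  exfalso; have := dvdn_sub h2 h1; rewrite subnDl => /dvdn_leq.
  have hp : (0 < m - k)%N by lia.
  by move=> /(_ hp); lia.
- have -> : (k < m.+1)%N = false by lia.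
  have -> : (k.+1 < m.+1)%N = false by lia.
  have -> : (k.+1 < m.+2)%N = false by lia.
  by rewrite ev_sigma !ev0 mul0r addr0.
- subst k.
  have -> : (m < m.+1)%N = true by lia.
  have -> : (m.+1 < m.+1)%N = false by lia.
  have -> : (m.+1 < m.+2)%N = true by lia.
  rewrite ev0 add0r !ev_sigma !ev_sig !ev_eps0.
  by case: (n %| (t + m).+1)%N; rewrite ?mulr1 ?mulr0.
Qed.

Lemma Q_fold d m : (m + d < n)%N ->
  foldl (skmul n a) (Q m) [seq 1 + 'X * (epsA n a (n - j))%:P | j <- iota m.+1 d]
  = Q (m + d).
Proof.
elim: d m => [|d IH] m hmd /=; first by rewrite addn0.
rewrite Q_step; last by lia.
by rewrite IH -?addSnnS //; lia.
Qed.

Lemma Q0 : Q 0 = (epsA n a 0)%:P.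
Proof.
apply/polyP => k; rewrite /Q coef_poly coefC; case: k => //.
Qed.

End Ev.

Theorem theorem4p6 (F : finFieldType) (n : nat) (a : F) (delta : nat) :
  n.-primitive_root a -> (delta <= n.-1)%N ->
  let pC : {poly cycA F n} -> Prop :=
    fun P => exists v, codeC n a delta v /\ P = pfrak n v in
  let sumz : {poly cycA F n} := \poly_(nu < delta.+1) 1 in
  let ga : {poly cycA F n} :=
    \poly_(nu < delta.+1)
       in_qpoly ('X^n - 1) (\sum_(i < n) (a ^+ (nu * i)) *: 'X^i) in
  let gb : {poly cycA F n} := skmul n a (epsA n a 0)%:P sumz in
  (* (a) *)
  (ga = skmul n a (in_qpoly ('X^n - 1)
                     (\prod_(1 <= i < n) ('X - (a ^+ i)%:P)))%:P sumz
   /\ (forall P, pC P <-> left_ideal_gen n a ga P))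
  /\
  (* (b) *)
  (gb = foldl (skmul n a) (epsA n a 0)%:P
              [seq 1 + 'X * (epsA n a (n - j))%:P | j <- iota 1 delta]
   /\ (forall P, pC P <-> left_ideal_gen n a gb P)).
Proof.
move=> Hp hd pC sumz ga gb.
have n0 := n_gt0 Hp.
have gaE : ga = skmul n a (in_qpoly ('X^n - 1)
                     (\prod_(1 <= i < n) ('X - (a ^+ i)%:P)))%:P sumz.
  apply/polyP => k; rewrite (coef_skmulC Hp) /ga /sumz !coef_poly.
  case: ifP => _; last by rewrite mulr0.
  rewrite mulr1; apply: (ev_inj Hp) => t _.
  rewrite (ev_pX Hp) (ev_sig Hp) (ev_prodp Hp) mul1r /W; apply: eq_bigr => i _.
  by rewrite exprD exprMn mulrC -!exprM mulnC.
have gbE : gb = Q n a delta.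
  apply/polyP => k; rewrite /gb (coef_skmulC Hp) /sumz /Q !coef_poly.
  by case: ifP => _; rewrite ?mulr1 ?mulr0.
split; split.
- exact: gaE.
- move=> P; rewrite gaE; exact: (char_ideal Hp delta (c := 1) (oner_neq0 _) (ev_prodp Hp)).
- rewrite gbE -Q0 (Q_fold Hp); last by lia.
  by rewrite add0n.
- move=> P; rewrite /gb.
  exact: (char_ideal Hp delta (c := (n%:R)^-1) (invr_neq0 (prim_root_natf_neq0 Hp)) (ev_eps0W Hp)).
Qed.
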